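(* Let $p$ be a prime and let $G\cong C_{p^2}\times C_p$ be the non-cyclic metacyclic abelian group of order $p^3$. Then there exist at least $p+1$ pairwise non-isomorphic local nearrings whose additive group is isomorphic to $G$.
   Context: A (left) nearring is a set $R$ with two binary operations $+$ and $\cdot$ such that $(R,+)$ is a group with neutral element $0$, $(R,\cdot)$ is a semigroup, and $x\cdot(y+z)=x\cdot y+x\cdot z$ for all $x,y,z\in R$. A nearring with identity is one where $(R,\cdot)$ is a monoid. A nearring $R$ with identity is called local if the set $L$ of all non-invertible elements of $(R,\cdot)$ is a subgroup of $(R,+)$. The additive group of $R$ is $(R,+)$. Two nearrings are isomorphic if there is a bijection preserving both operations. *)

(* Defs.v *)
From mathcomp Require Import all_boot all_order all_algebra.
Set Implicit Arguments. Unset Strict Implicit. Unset Printing Implicit Defensive.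
Import GRing.Theory.
Local Open Scope ring_scope.

Record nearring := NearRing {
  nr_car :> Type;
  nr_add : nr_car -> nr_car -> nr_car;
  nr_zero : nr_car;
  nr_opp : nr_car -> nr_car;
  nr_mul : nr_car -> nr_car -> nr_car;
  nr_one : nr_car;
  nr_addA : forall x y z, nr_add x (nr_add y z) = nr_add (nr_add x y) z;
  nr_add0r : forall x, nr_add nr_zero x = x;
  nr_addr0 : forall x, nr_add x nr_zero = x;
  nr_addNr : forall x, nr_add (nr_opp x) x = nr_zero;
  nr_addrN : forall x, nr_add x (nr_opp x) = nr_zero;
  nr_mulA : forall x y z, nr_mul x (nr_mul y z) = nr_mul (nr_mul x y) z;
  nr_mul1r : forall x, nr_mul nr_one x = x;
  nr_mulr1 : forall x, nr_mul x nr_one = x;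
  nr_mulDr : forall x y z, nr_mul x (nr_add y z) = nr_add (nr_mul x y) (nr_mul x z)
}.

Definition nr_unit (R : nearring) (x : R) : Prop :=
  exists y : R, nr_mul x y = nr_one R /\ nr_mul y x = nr_one R.

Definition nr_local (R : nearring) : Prop :=
  let L := fun x : R => ~ nr_unit x in
  [/\ L (nr_zero R),
      (forall x y, L x -> L y -> L (nr_add x y)) &
      (forall x, L x -> L (nr_opp x))].

Definition nr_additive_iso (R : nearring) (A : zmodType) : Prop :=
  exists f : R -> A, bijective f /\ forall x y, f (nr_add x y) = f x + f y.

Definition nr_isomorphic (R S : nearring) : Prop :=
  exists f : R -> S, bijective f /\
    (forall x y, f (nr_add x y) = nr_add (f x) (f y)) /\
    (forall x y, f (nr_mul x y) = nr_mul (f x) (f y)).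

Definition Cp2xCp (p : nat) : zmodType := ('Z_(p ^ 2) * 'Z_p)%type.

(* Main.v *)
Require Import Defs.
From mathcomp Require Import all_boot all_order all_algebra.
From mathcomp Require Import all_field ring zify.
Set Implicit Arguments. Unset Strict Implicit. Unset Printing Implicit Defensive.
Import GRing.Theory.

Definition pm (R : nearring) (n : nat) (x : R) : R := iter n (nr_add x) (nr_zero R).
Definition zs (R : nearring) := forall y : R, nr_mul (nr_zero R) y = nr_zero R.
Definition sq (R : nearring) (p : nat) := exists x y : R,
  [/\ pm p x = nr_zero R, pm p y = nr_zero R & nr_mul x y <> nr_zero R].
Definition Pk (R : nearring) (p k : nat) := forall (n : nat) (w : R),
  pm p w = nr_zero R -> exists z,
    nr_add (nr_mul (pm n (nr_one R)) w) (nr_opp (pm (n ^ k)%N w)) = pm p z.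

Lemma add_idem (R : nearring) (a : R) : a = nr_add a a -> a = nr_zero R.
Proof.
move=> h; transitivity (nr_add (nr_opp a) (nr_add a a)).
  by rewrite nr_addA nr_addNr nr_add0r.
by rewrite -h nr_addNr.
Qed.

Lemma add_inv (R : nearring) (a y : R) : nr_add y a = nr_zero R -> y = nr_opp a.
Proof.
move=> h; by rewrite -(nr_addr0 y) -(nr_addrN a) nr_addA h nr_add0r.
Qed.

Lemma iso_sym R S : nr_isomorphic R S -> nr_isomorphic S R.
Proof.
case=> f [[g fg gf] [fa fm]]; exists g; split; first by exists f.
split=> x y; apply: (can_inj fg); by rewrite ?fa ?fm !gf.
Qed.


Lemma iso_facts (R S : nearring) (f : R -> S) :
  bijective f -> (forall x y, f (nr_add x y) = nr_add (f x) (f y)) ->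
  (forall x y, f (nr_mul x y) = nr_mul (f x) (f y)) ->
  [/\ f (nr_zero R) = nr_zero S, forall x, f (nr_opp x) = nr_opp (f x),
      forall n x, f (pm n x) = pm n (f x) & f (nr_one R) = nr_one S].
Proof.
move=> [g fg gf] fa fm.
have f0 : f (nr_zero R) = nr_zero S.
  by apply: add_idem; rewrite -fa nr_add0r.
split => //.
- by move=> x; apply: add_inv; rewrite -fa nr_addNr.
- by elim=> [|n IH] x //=; rewrite fa -IH.
- have h1 : forall y, nr_mul (f (nr_one R)) y = y.
    by move=> y; rewrite -[y]gf -fm nr_mul1r.
  by rewrite -[RHS]h1 nr_mulr1.
Qed.

Lemma zs_iso R S : nr_isomorphic R S -> zs R -> zs S.
Proof.
case=> f [fb [fa fm]] hz y; have [f0 _ _ _] := iso_facts fb fa fm.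
case: fb => g fg gf; by rewrite -[y]gf -f0 -fm hz.
Qed.

Lemma sq_iso R S p : nr_isomorphic R S -> sq R p -> sq S p.
Proof.
case=> f [fb [fa fm]] [x [y [hx hy hxy]]]; have [f0 _ fp _] := iso_facts fb fa fm.
exists (f x), (f y); split; rewrite -?fp ?hx ?hy //.
rewrite -fm -f0 => /(bij_inj fb); exact: hxy.
Qed.

Lemma Pk_iso R S p k : nr_isomorphic R S -> Pk R p k -> Pk S p k.
Proof.
case=> f [fb [fa fm]] hP n w hw; have [f0 fo fp f1] := iso_facts fb fa fm.
case: (fb) => g fg gf.
have hw' : pm p (g w) = nr_zero R.
  by apply: (bij_inj fb); rewrite fp gf f0.
have [z hz] := hP n _ hw'; exists (f z).
by rewrite -fp -hz fa fo fm !fp f1 gf.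
Qed.

Local Open Scope ring_scope.

Definition rd (p : nat) (a : 'Z_(p^2)) : 'Z_p := (nat_of_ord a)%:R.
Definition io (p : nat) (b : 'Z_p) : 'Z_(p^2) := (p * nat_of_ord b)%:R.
Arguments rd : clear implicits.
Arguments io : clear implicits.

Lemma p2gt1 p : prime p -> (1 < p ^ 2)%N.
Proof. move=> hp; have := prime_gt1 hp => h; rewrite (ltn_exp2l 0) //. Qed.

Lemma rd_nat p (hp : prime p) m : rd p (m%:R : 'Z_(p^2)) = m%:R :> 'Z_p.
Proof.
rewrite /rd val_Zp_nat ?p2gt1 //.
rewrite [in RHS](divn_eq m (p ^ 2)) natrD natrM natrX pchar_Zp ?prime_gt1 //.
by rewrite expr0n /= mulr0 add0r.
Qed.

Lemma io_nat p (hp : prime p) m : io p (m%:R : 'Z_p) = (p * m)%:R.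
Proof.
rewrite /io val_Zp_nat ?prime_gt1 //.
rewrite [in RHS](divn_eq m p) mulnDr natrD.
have -> : (p * (m %/ p * p))%N = (m %/ p * p ^ 2)%N by rewrite mulnCA mulnn.
by rewrite (natrM _ (m %/ p) (p ^ 2)) (pchar_Zp (p2gt1 hp)) mulr0 add0r.
Qed.

Lemma rdD p (hp : prime p) a b : rd p (a + b) = rd p a + rd p b :> 'Z_p.
Proof. by rewrite -[a]natr_Zp -[b]natr_Zp -natrD !rd_nat // natrD. Qed.
Lemma rdM p (hp : prime p) a b : rd p (a * b) = rd p a * rd p b :> 'Z_p.
Proof. by rewrite -[a]natr_Zp -[b]natr_Zp -natrM !rd_nat // natrM. Qed.
Lemma rd1 p (hp : prime p) : rd p (1 : 'Z_(p^2)) = 1.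
Proof. exact: (rd_nat hp 1). Qed.

Lemma rd0 p (hp : prime p) : rd p (0 : 'Z_(p^2)) = 0.
Proof. exact: (rd_nat hp 0). Qed.
Lemma rdN p (hp : prime p) a : rd p (- a) = - rd p a :> 'Z_p.
Proof. by apply/eqP; rewrite -subr_eq0 opprK -rdD // addNr rd0. Qed.
Lemma rd_io p (hp : prime p) b : rd p (io p b) = 0 :> 'Z_p.
Proof. by rewrite -[b]natr_Zp io_nat // rd_nat // natrM (pchar_Zp (prime_gt1 hp)) mul0r. Qed.
Lemma ioD p (hp : prime p) u v : io p (u + v) = io p u + io p v :> 'Z_(p^2).
Proof. by rewrite -[u]natr_Zp -[v]natr_Zp -natrD !io_nat // mulnDr natrD. Qed.
Lemma io0 p (hp : prime p) : io p (0 : 'Z_p) = 0.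
Proof. by rewrite -[0 : 'Z_p]/(0%:R) io_nat // muln0. Qed.
Lemma ioMl p (hp : prime p) a u : a * io p u = io p (rd p a * u).
Proof.
by rewrite -[a]natr_Zp -[u]natr_Zp rd_nat // -natrM !io_nat // -natrM mulnCA.
Qed.
Lemma ioMr p (hp : prime p) u e : io p u * e = io p (u * rd p e).
Proof. by rewrite mulrC ioMl // mulrC. Qed.
Lemma io1_neq0 p (hp : prime p) : io p (1 : 'Z_p) != 0.
Proof.
rewrite -[1 : 'Z_p]/(1%:R) io_nat // muln1.
apply/eqP => /(congr1 (@nat_of_ord _)); rewrite val_Zp_nat ?p2gt1 //.
have hpp : (p < p ^ 2)%N by rewrite -{1}(expn1 p) ltn_exp2l ?prime_gt1.
rewrite modn_small //.
by move=> h; move: (prime_gt0 hp); rewrite h.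
Qed.
Lemma io_mulrn p (hp : prime p) u : io p u = ((nat_of_ord u)%:R : 'Z_(p^2)) *+ p.
Proof. by rewrite /io natrM mulrC mulr_natr. Qed.

Lemma rd0_io p (hp : prime p) a : rd p a = 0 -> exists u, a = io p u.
Proof.
rewrite /rd => /(congr1 (@nat_of_ord _)); rewrite val_Zp_nat ?prime_gt1 // => h.
exists ((nat_of_ord a %/ p)%:R); rewrite io_nat // mulnC divnK; first by rewrite natr_Zp.
by apply/eqP.
Qed.
Lemma rd0_mul p (hp : prime p) a c : rd p a = 0 -> rd p c = 0 -> a * c = 0 :> 'Z_(p^2).
Proof.
move=> /(rd0_io hp) [u ->] hc; by rewrite ioMr // hc mulr0 io0.
Qed.
Lemma Zp_nat_eq0 q m : (1 < q)%N -> ((m%:R : 'Z_q) == 0) = (q %| m)%N.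
Proof.
move=> hq; apply/eqP/idP => [/(congr1 (@nat_of_ord _))|]; rewrite ?val_Zp_nat //.
  by move=> h; apply/eqP.
move=> h; apply: val_inj => /=; by rewrite val_Zp_nat // (eqP h).
Qed.
Lemma rd_unit p (hp : prime p) a : rd p a != 0 -> a \is a GRing.unit.
Proof.
rewrite /rd Zp_nat_eq0 ?prime_gt1 // => h.
rewrite -[a]natr_Zp unitZpE ?p2gt1 // coprime_pexpl // prime_coprime //.
Qed.
Lemma Zp_unit p (hp : prime p) (x : 'Z_p) : x != 0 -> x \is a GRing.unit.
Proof.
rewrite -[x]natr_Zp Zp_nat_eq0 ?prime_gt1 // => h.
by rewrite unitZpE ?prime_gt1 // prime_coprime.
Qed.
Lemma mulrn_p_rd p (hp : prime p) (a : 'Z_(p^2)) : a *+ p = 0 -> rd p a = 0.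
Proof.
rewrite -[a]natr_Zp -mulrnA => /eqP; rewrite Zp_nat_eq0 ?p2gt1 // => h.
apply/eqP; rewrite /rd natr_Zp Zp_nat_eq0 ?prime_gt1 //.
by rewrite -(@dvdn_pmul2r p) ?prime_gt0 // -mulnn.
Qed.

Notation T p := ('Z_(p^2) * 'Z_p)%type.
Definition nmul p (t : 'Z_p) (k : nat) (x y : T p) : T p :=
  (x.1 * y.1 + io p (t * x.2 * y.2), x.2 * rd p y.1 + rd p x.1 ^+ k * y.2).
Arguments nmul : clear implicits.

Lemma nmulA p (hp : prime p) t k (H : t = 0 \/ k = 1%N) (x y z : T p) :
  nmul p t k x (nmul p t k y z) = nmul p t k (nmul p t k x y) z.
Proof.
case: x => a b; case: y => c d; case: z => e f; rewrite /nmul /=.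
congr (_, _).
  rewrite mulrDr mulrDl ioMl // ioMr // mulrA -!addrA -!ioD //; congr (_ + io p _).
  case: H => [-> | ->]; first by ring.
  by rewrite !expr1; ring.
rewrite rdD // rdM // rd_io // addr0 rdD // rdM // rd_io // addr0 exprMn.
ring.
Qed.

Lemma pairD p (x y : T p) : x + y = (x.1 + y.1, x.2 + y.2).
Proof. by []. Qed.

Lemma nmulDr p (hp : prime p) t k (x y z : T p) :
  nmul p t k x (y + z) = nmul p t k x y + nmul p t k x z.
Proof.
case: x => a b; case: y => c d; case: z => e f; rewrite /nmul /=.
rewrite [RHS]pairD /=.
congr (_, _); last by rewrite rdD //; ring.
rewrite mulrDr !mulrDr ioD //. ring.
Qed.

Definition NR p (hp : prime p) (t : 'Z_p) (k : nat) (H : t = 0 \/ k = 1%N) : nearring.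
refine (@NearRing (T p) (fun x y : T p => x + y) (0 : T p) (fun x : T p => - x) (nmul p t k) (1, 0)
  _ _ _ _ _ _ _ _ _).
- by move=> *; rewrite addrA.
- by move=> *; rewrite add0r.
- by move=> *; rewrite addr0.
- by move=> *; rewrite addNr.
- by move=> *; rewrite addrN.
- by move=> *; apply: nmulA.
- by case=> c d; rewrite /nmul /= rd1 // !(expr1n, mul1r, mul0r, mulr0) io0 // addr0 add0r.
- by case=> a b; rewrite /nmul /= rd1 // !(mulr1, mulr0) io0 // !addr0.
- by move=> *; apply: nmulDr.
Defined.
Arguments NR {p} hp t k H.

Lemma rinv_unit (R : nearring) (P : R -> Prop) :
  (forall x, P x -> exists y, nr_mul x y = nr_one R /\ P y) ->
  forall x, P x -> nr_unit x.
Proof.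
move=> H x Px; have [y [xy Py]] := H x Px; have [z [yz _]] := H y Py.
have xz : x = z by rewrite -(nr_mulr1 x) -yz nr_mulA xy nr_mul1r.
by exists y; split => //; rewrite xz.
Qed.

Lemma Zp_neq01 p (hp : prime p) : (1 : 'Z_p) != 0.
Proof. exact: oner_neq0. Qed.


Lemma NR_mul1 p (hp : prime p) t k (x y : T p) :
  nmul p t k x y = (1, 0) -> rd p x.1 * rd p y.1 = 1.
Proof.
case: x => a b; case: y => c d; rewrite /nmul => /(congr1 fst); cbn [fst snd] => h1.
by rewrite -rdM // -rd1 // -h1 rdD // rd_io // addr0.
Qed.

Lemma NR_unitE p (hp : prime p) t k H (x : NR hp t k H) :
  nr_unit x <-> rd p x.1 != 0.
Proof.
split.
  case=> y [xy _]; have := NR_mul1 hp xy; apply: contraPneq => ->.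
  by rewrite mul0r => /esym/eqP; rewrite oner_eq0.
have Ak : forall a : 'Z_(p^2), rd p a != 0 -> rd p a ^+ k \is a GRing.unit.
  by move=> a ha; rewrite unitrX // Zp_unit.
apply: (@rinv_unit (NR hp t k H) (fun x : T p => rd p x.1 != 0)) => {}x hx.
have inj : injective (nmul p t k x).
  case: x hx => a b; cbn [fst] => ha [c d] [c' d']; rewrite /nmul => E.
  have E1 := congr1 fst E; have E2 := congr1 snd E; cbn [fst snd] in E1, E2.
  have ec : rd p c = rd p c'.
    have := congr1 (rd p) E1; rewrite !rdD // !rd_io // !addr0 !rdM //.
    by apply: mulrI; apply: Zp_unit.
  rewrite ec in E2; move/addrI: E2 => /mulrI -/(_ (Ak _ ha)) ed.
  rewrite ed in E1; move/addIr: E1 => /mulrI -/(_ (rd_unit hp ha)) ->.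
  by rewrite ed.
have [g gK Kg] := injF_bij inj.
exists (g (1, 0)); split; first exact: Kg.
have := NR_mul1 hp (Kg (1, 0)); apply: contraPneq => ->.
by rewrite mulr0 => /esym/eqP; rewrite oner_eq0.
Qed.

Lemma NR_local p (hp : prime p) t k H : nr_local (NR hp t k H).
Proof.
have E : forall x : NR hp t k H, ~ nr_unit x <-> rd p x.1 = 0.
  move=> x; rewrite NR_unitE; split; first by move/negP; rewrite negbK => /eqP.
  by move=> ->; rewrite eqxx.
split.
- by apply/E; rewrite /= rd0.
- by move=> x y /E hx /E hy; apply/E; rewrite /= rdD // hx hy addr0.
- by move=> x /E hx; apply/E; rewrite /= rdN // hx oppr0.
Qed.

Lemma NR_add p (hp : prime p) t k H : nr_additive_iso (NR hp t k H) (Cp2xCp p).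
Proof.
exists (fun x : T p => x : Cp2xCp p); split => //.
by exists (fun x : Cp2xCp p => x : T p).
Qed.

Lemma pairN p (x : T p) : - x = (- x.1, - x.2).
Proof. by []. Qed.
Lemma pair0 p : (0 : T p) = (0, 0).
Proof. by []. Qed.

Lemma NR_pm p (hp : prime p) t k H (x : NR hp t k H) n :
  pm n x = (x.1 *+ n, x.2 *+ n).
Proof.
elim: n => [|n IH] //=; rewrite IH; change (nr_add _ _) with (x + (x.1 *+ n, x.2 *+ n)).
by rewrite pairD /= !mulrS.
Qed.

Lemma rdMn p (hp : prime p) (a : 'Z_(p^2)) m : rd p (a *+ m) = rd p a *+ m.
Proof. by rewrite -mulr_natr rdM // rd_nat // mulr_natr. Qed.

Lemma NR_zs p (hp : prime p) t k H : (0 < k)%N -> zs (NR hp t k H).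
Proof.
move=> k0 [c d]; change (nmul p t k (0, 0) (c, d) = (0, 0)); rewrite /nmul /=.
by rewrite rd0 // expr0n eqn0Ngt k0 /= !(mul0r, mulr0) io0 // !addr0.
Qed.

Lemma NR_not_zs p (hp : prime p) H : ~ zs (NR hp 0 0 H).
Proof.
move=> /(_ (0, 1)); change (nmul p 0 0 (0, 0) (0, 1) = (0, 0) -> False).
rewrite /nmul => /(congr1 snd); cbn [snd]; rewrite expr0 mul0r add0r mulr1.
by move/eqP; rewrite oner_eq0.
Qed.

Lemma NR_sq p (hp : prime p) H : sq (NR hp 1 1 H) p.
Proof.
have e : ((1 : 'Z_p) *+ p) = 0 by rewrite (pchar_Zp (prime_gt1 hp)).
exists (0, 1), (0, 1); split.
- by rewrite NR_pm /= mul0rn e.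
- by rewrite NR_pm /= mul0rn e.
change (nmul p 1 1 (0, 1) (0, 1) <> (0, 0)); rewrite /nmul => /(congr1 fst).
cbn [fst]; rewrite mul0r add0r !mulr1; apply/eqP; exact: io1_neq0.
Qed.

Lemma NR_not_sq p (hp : prime p) k H : (0 < k)%N -> ~ sq (NR hp 0 k H) p.
Proof.
move=> k0 [[a b] [[c d] []]]; rewrite !NR_pm /= => hx hy.
have ha := mulrn_p_rd hp (congr1 fst hx); have hc := mulrn_p_rd hp (congr1 fst hy).
apply; change (nmul p 0 k (a, b) (c, d) = (0, 0)); rewrite /nmul /=.
rewrite ha hc rd0_mul // expr0n eqn0Ngt k0 /= !(mul0r, mulr0) io0 //.
by rewrite !addr0.
Qed.

Lemma pm_char p (hp : prime p) t k H (a : 'Z_(p^2)) :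
  rd p a = 0 -> exists z : NR hp t k H, (a, 0) = pm p z.
Proof.
move=> /(rd0_io hp) [u ->]; exists ((nat_of_ord u)%:R, 0).
by rewrite NR_pm /= mul0rn io_mulrn.
Qed.

Lemma NR_Pk p (hp : prime p) k H : Pk (NR hp 0 k H) p k.
Proof.
move=> n [c d]; rewrite !NR_pm /= => /(congr1 fst) /= /(mulrn_p_rd hp) hc.
change (exists z : NR hp 0 k H,
  nmul p 0 k (1 *+ n, 0 *+ n) (c, d) + - (c *+ n ^ k, d *+ n ^ k) = pm p z).
rewrite /nmul pairN pairD /=.
have -> : 0 *+ n * rd p c + rd p (1 *+ n) ^+ k * d + - (d *+ n ^ k) = 0.
  by rewrite mul0rn mul0r add0r rd_nat // -natrX mulr_natl subrr.
apply: pm_char.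
by rewrite !rdD // rdN // rd_io // rdM // rdMn // hc mulr0 mul0rn oppr0 !addr0.
Qed.

Lemma NR_not_Pk p (hp : prime p) k j H n :
  (n ^ k)%:R != (n ^ j)%:R :> 'Z_p -> ~ Pk (NR hp 0 j H) p k.
Proof.
move=> hn /(_ n (0, 1)) []; first by rewrite NR_pm /= mul0rn (pchar_Zp (prime_gt1 hp)).
move=> z; rewrite !NR_pm; cbn [fst snd].
change (nmul p 0 j (1 *+ n, 0 *+ n) (0, 1) + - (0 *+ n ^ k, 1 *+ n ^ k) = (z.1 *+ p, z.2 *+ p) -> False).
rewrite /nmul pairN pairD => /(congr1 snd); cbn [snd].
rewrite -[z.2 *+ p]mulr_natr (pchar_Zp (prime_gt1 hp)) !mulr0; cbn [fst]; rewrite add0r mulr1 rd_nat //.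
move/eqP; rewrite subr_eq0 -natrX eq_sym; by apply/negP.
Qed.

Lemma Fp_pow_distinct p (hp : prime p) k j : (0 < k)%N -> (k < j)%N -> (j < p)%N ->
  exists x : 'F_p, x ^+ k != x ^+ j.
Proof.
move=> k0 kj jp.
case: (boolP [forall x : 'F_p, x ^+ k == x ^+ j]); last first.
  by move/forallPn => [x hx]; exists x.
move/forallP => hall; exfalso.
set m := (j - k)%N.
have m0 : (0 < m)%N by rewrite subn_gt0.
have hj : j = (k + m)%N by rewrite subnKC // ltnW.
pose rs := enum [pred x : 'F_p | x != 0].
have := @max_unity_roots _ m rs m0.
have -> : all m.-unity_root rs.
  apply/allP => x; rewrite mem_enum inE => x0; rewrite unity_rootE.
  have := eqP (hall x); rewrite hj exprD => /esym h.
  apply/eqP; apply: (mulfI (expf_neq0 k x0)); by rewrite h mulr1.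
move=> /(_ isT (enum_uniq _)).
rewrite -cardE.
have -> : #|[pred x : 'F_p | x != 0]| = #|'F_p|.-1 by rewrite -(cardC1 (0 : 'F_p)); apply: eq_card => x; rewrite !inE.
rewrite card_Fp //.
move=> h; have : (p.-1 <= j - k)%N := h.
have := prime_gt1 hp. lia.
Qed.

Lemma Zp_pow_distinct p (hp : prime p) k j : (0 < k)%N -> (0 < j)%N -> (k < p)%N -> (j < p)%N ->
  k != j -> exists n : nat, (n ^ k)%:R != (n ^ j)%:R :> 'Z_p.
Proof.
move=> k0 j0 kp jp kj.
have key : forall k j, (0 < k)%N -> (k < j)%N -> (j < p)%N ->
    exists n : nat, (n ^ k)%:R != (n ^ j)%:R :> 'Z_p.
  clear k0 j0 kp jp kj; move=> {k j} k j k0 kj jp.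
  have [x hx] := Fp_pow_distinct hp k0 kj jp.
  exists (nat_of_ord x); apply: contra hx => /eqP /(congr1 (@nat_of_ord _)).
  rewrite !val_Zp_nat ?prime_gt1 // => h.
  rewrite -[x]natr_Zp -!natrX; apply/eqP; apply: val_inj => /=.
  by rewrite !val_Fp_nat.
case: (ltngtP k j) kj => // h _; first exact: key.
have [n hn] := key j k j0 h kp; exists n; by rewrite eq_sym.
Qed.

Lemma not_zs_gen p (hp : prime p) t k H : t = 0 -> k = 0%N -> ~ zs (NR hp t k H).
Proof. move=> ht hk; subst; exact: NR_not_zs. Qed.
Lemma sq_gen p (hp : prime p) t k H : t = 1 -> k = 1%N -> sq (NR hp t k H) p.
Proof. move=> ht hk; subst; exact: NR_sq. Qed.
Lemma not_sq_gen p (hp : prime p) t k H : t = 0 -> (0 < k)%N -> ~ sq (NR hp t k H) p.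
Proof. move=> ht hk; subst; exact: NR_not_sq. Qed.
Lemma Pk_gen p (hp : prime p) t k H : t = 0 -> Pk (NR hp t k H) p k.
Proof. move=> ht; subst; exact: NR_Pk. Qed.
Lemma not_Pk_gen p (hp : prime p) t k j H n : t = 0 ->
  (n ^ k)%:R != (n ^ j)%:R :> 'Z_p -> ~ Pk (NR hp t j H) p k.
Proof. move=> ht; subst; exact: NR_not_Pk. Qed.

Definition tt_ p (i : 'I_p.+1) : 'Z_p := if nat_of_ord i == p then 1 else 0.
Definition kk_ p (i : 'I_p.+1) : nat := if nat_of_ord i == p then 1%N else nat_of_ord i.
Lemma HH_ p (i : 'I_p.+1) : tt_ i = 0 \/ kk_ i = 1%N.
Proof. by rewrite /tt_ /kk_; case: ifP => _; [right | left]. Qed.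

Definition Fam p (hp : prime p) (i : 'I_p.+1) : nearring := NR hp (tt_ i) (kk_ i) (HH_ i).

Lemma Fam_lt p (hp : prime p) (i j : 'I_p.+1) :
  (i < j)%N -> ~ nr_isomorphic (Fam hp i) (Fam hp j).
Proof.
move=> ij iso; have jp : (j <= p)%N by rewrite -ltnS.
have ip : (i < p)%N by apply: leq_trans ij jp.
have ti : tt_ i = 0 by rewrite /tt_ ltn_eqF.
have ki : kk_ i = i by rewrite /kk_ ltn_eqF.
case: (posnP i) => i0.
  have hk : (0 < kk_ j)%N.
    by rewrite /kk_; case: ifP => _ //; rewrite (leq_ltn_trans _ ij).
  apply: (@not_zs_gen p hp (tt_ i) (kk_ i) (HH_ i) ti); first by rewrite ki i0.
  exact: (zs_iso (iso_sym iso) (@NR_zs _ hp _ _ _ hk)).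
case: (ltngtP j p) jp => // jp _.
  have tj : tt_ j = 0 by rewrite /tt_ ltn_eqF.
  have kj : kk_ j = j by rewrite /kk_ ltn_eqF.
  have ij' : (nat_of_ord i != j)%N by rewrite neq_ltn ij.
  have [n hn] := Zp_pow_distinct hp i0 (leq_ltn_trans (leq0n _) ij) ip jp ij'.

  apply: (@not_Pk_gen p hp (tt_ j) i (kk_ j) (HH_ j) n tj); first by rewrite kj.
  have := Pk_iso iso (@Pk_gen p hp _ _ (HH_ i) ti); by rewrite ki.
have tj : tt_ j = 1 by rewrite /tt_ jp eqxx.
have kj : kk_ j = 1%N by rewrite /kk_ jp eqxx.
apply: (@not_sq_gen p hp (tt_ i) (kk_ i) (HH_ i) ti); first by rewrite ki.
exact: (sq_iso (iso_sym iso) (@sq_gen p hp _ _ (HH_ j) tj kj)).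
Qed.

Theorem theorem3 (p : nat) (hp : prime p) :
  exists F : 'I_p.+1 -> nearring,
    (forall i, nr_local (F i) /\ nr_additive_iso (F i) (Cp2xCp p)) /\
    (forall i j, i != j -> ~ nr_isomorphic (F i) (F j)).
Proof.
exists (Fam hp); split.
  by move=> i; split; [exact: NR_local | exact: NR_add].
move=> i j ij iso; case: (ltngtP i j) => h.
- exact: Fam_lt h iso.
- exact: Fam_lt h (iso_sym iso).
- by move: ij; rewrite (val_inj h) eqxx.
Qed.
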